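(* Let $\alpha\in\mathbb N$. Define the polynomials $$p_n^{(\alpha)}(x)=\binom{\alpha+n-1}{n}_{\mathbb F}\,p_n(x\phi;q^{\alpha-1},1;q),\quad n\ge 0.$$ Then $$p_n^{(\alpha)}(x)=\sum_{k=0}^n(-1)^{kn-\binom{k}{2}}\binom{n}{k}_{\mathbb F}\binom{\alpha+n+k-1}{n}_{\mathbb F}x^k,$$ and $$\int p_n^{(\alpha)}(x)p_m^{(\alpha)}(x)\,d\mu_\alpha(x)=\delta_{n,m}(-1)^{\alpha n}\frac{F_\alpha}{F_{\alpha+2n}},$$ so that the polynomials $$P_n^{(\alpha)}(x)=\sqrt{(-1)^{\alpha n}F_{\alpha+2n}/F_\alpha}\;p_n^{(\alpha)}(x)$$ satisfy $\int P_n^{(\alpha)}P_m^{(\alpha)}\,d\mu_\alpha=\delta_{n,m}$, i.e. they are the corresponding orthonormal polynomials.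
   Context: $F_n$ are the Fibonacci numbers ($F_0=0,F_1=1,F_{n+1}=F_n+F_{n-1}$). $\phi=(1+\sqrt5)/2$, $q=(1-\sqrt5)/(1+\sqrt5)$. The Fibonomial coefficients are $\binom{n}{k}_{\mathbb F}=\prod_{i=1}^k F_{n-i+1}/F_i$ for $0\le k\le n$ (empty product $=1$). With $(a;q)_k=\prod_{j=0}^{k-1}(1-aq^j)$, the little $q$-Jacobi polynomials are $$p_n(x;a,b;q)=\sum_{k=0}^n\frac{(q^{-n};q)_k(abq^{n+1};q)_k}{(q;q)_k(aq;q)_k}(xq)^k.$$ $\mu_\alpha=(1-q^\alpha)\sum_{k=0}^\infty q^{\alpha k}\delta_{q^k/\phi}$, a real-valued measure of total mass 1 ($\delta_a$ the unit point mass at $a$). The square root of a negative number is the principal one ($\sqrt{-t}=i\sqrt t$ for $t>0$). *)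

(* Defs.v *)
From Stdlib Require Import Reals Lra Lia.
From Coquelicot Require Import Coquelicot.
Open Scope R_scope.

Fixpoint fib (n : nat) : nat :=
  match n with
  | O => O
  | S O => 1%nat
  | S ((S m) as p) => (fib p + fib m)%nat
  end.

Definition F (n : nat) : R := INR (fib n).

Fixpoint fibonomial (n k : nat) : R :=
  match k with
  | O => 1
  | S j => fibonomial n j * (F (n - j) / F (S j))
  end.

Definition phi : R := (1 + sqrt 5) / 2.
Definition q : R := (1 - sqrt 5) / (1 + sqrt 5).

Fixpoint qpoch (a qq : R) (k : nat) : R :=
  match k with
  | O => 1
  | S j => qpoch a qq j * (1 - a * qq ^ j)
  end.

Definition little_qjacobi (n : nat) (x a b qq : R) : R :=
  sum_f_R0 (fun k => qpoch (/ qq ^ n) qq k * qpoch (a * b * qq ^ (S n)) qq k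
                     / (qpoch qq qq k * qpoch (a * qq) qq k) * (x * qq) ^ k) n.

Definition palpha (alpha n : nat) (x : R) : R :=
  fibonomial (alpha + n - 1) n * little_qjacobi n (x * phi) (q ^ (alpha - 1)) 1 q.

(* weights of mu_alpha = (1 - q^alpha) sum_k q^(alpha k) delta_{q^k/phi} *)
Definition mu_weight (alpha k : nat) : R := (1 - q ^ alpha) * (q ^ alpha) ^ k.
Definition mu_point (k : nat) : R := q ^ k / phi.

Definition is_mu_integral (alpha : nat) (f : R -> R) (v : R) : Prop :=
  is_series (fun k => mu_weight alpha k * f (mu_point k)) v.

Definition is_mu_integralC (alpha : nat) (f : R -> C) (v : C) : Prop :=
  @is_series C_AbsRing C_NormedModule
    (fun k => Cmult (RtoC (mu_weight alpha k)) (f (mu_point k))) v.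

Definition csqrt_principal (t : R) : C :=
  if Rle_dec 0 t then (sqrt t, 0) else (0, sqrt (- t)).

Definition Palpha (alpha n : nat) (x : R) : C :=
  Cmult (csqrt_principal ((-1) ^ (alpha * n) * F (alpha + 2 * n) / F alpha))
        (RtoC (palpha alpha n x)).

(* Main.v *)
Require Import Defs.
From Stdlib Require Import Reals Lra Lia Psatz.
From Coquelicot Require Import Coquelicot.
Open Scope R_scope.

Lemma sqrt5_facts : sqrt 5 * sqrt 5 = 5 /\ 2 < sqrt 5.
Proof.
  split. apply sqrt_sqrt; lra.
  rewrite <- (sqrt_square 2) by lra. apply sqrt_lt_1_alt. lra.
Qed.

Lemma phi_gt1 : 1 < phi.
Proof. unfold phi. destruct sqrt5_facts. lra. Qed.

Lemma phi_sq : phi * phi = phi + 1.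
Proof. unfold phi. destruct sqrt5_facts. nra. Qed.

Lemma q_phi : q * (phi * phi) = -1.
Proof. unfold q, phi. destruct sqrt5_facts. field_simplify; nra. Qed.

Lemma q_eq : q = - / (phi * phi).
Proof. pose proof q_phi. pose proof phi_gt1. field_simplify_eq. nra. nra. Qed.

Lemma q_neg : q < 0.
Proof. rewrite q_eq. pose proof phi_gt1. assert (0 < / (phi*phi)) by (apply Rinv_0_lt_compat; nra). lra. Qed.

Lemma q_gtm1 : -1 < q.
Proof. rewrite q_eq. pose proof phi_gt1. assert (/ (phi*phi) < 1).
  { rewrite <- Rinv_1. apply Rinv_lt_contravar; nra. } lra. Qed.

Lemma q_abs : Rabs q < 1.
Proof. pose proof q_neg; pose proof q_gtm1. rewrite Rabs_left; lra. Qed.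

Lemma q_neq0 : q <> 0.
Proof. pose proof q_neg; lra. Qed.

Lemma abs_pow_lt1 : forall r k, Rabs r < 1 -> Rabs (r ^ k) <= 1.
Proof. intros r k H. rewrite <- RPow_abs. induction k. simpl; lra. simpl.
  pose proof (Rabs_pos r). nra. Qed.

Lemma qpow_abs : forall k, (0 < k)%nat -> Rabs (q ^ k) < 1.
Proof. intros k Hk. destruct k. lia. simpl. rewrite Rabs_mult.
  pose proof (abs_pow_lt1 q k q_abs). pose proof q_abs. pose proof (Rabs_pos (q^k)). pose proof (Rabs_pos q). nra. Qed.

Lemma one_minus_qpow : forall k, (0 < k)%nat -> 1 - q ^ k <> 0.
Proof. intros k Hk H. pose proof (qpow_abs k Hk). assert (q^k = 1) by lra. rewrite H1 in H0. rewrite Rabs_R1 in H0. lra. Qed.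

Lemma phi_1q : phi * (1 + q) = 1.
Proof. pose proof q_phi; pose proof phi_sq; pose proof phi_gt1.
  apply Rmult_eq_reg_l with phi; [|lra]. nra. Qed.

Lemma F_succ : forall m, F (S m) * (1 - q) = phi ^ m * (1 - q ^ (S m)).
Proof.
  assert (H: forall m, F (S m) * (1 - q) = phi ^ m * (1 - q ^ (S m)) /\
                       F (S (S m)) * (1 - q) = phi ^ (S m) * (1 - q ^ (S (S m)))).
  { induction m.
    - unfold F; simpl. pose proof q_phi; pose proof phi_sq. split; [lra|]. pose proof phi_1q. nra.
    - destruct IHm as [H1 H2]. split; [exact H2|].
      unfold F in *. replace (fib (S (S (S m)))) with (fib (S (S m)) + fib (S m))%nat by reflexivity.
      rewrite plus_INR, Rmult_plus_distr_r, H1, H2.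
      pose proof q_phi; pose proof phi_sq. simpl.
      set (A := phi ^ m); set (B := q ^ m).
      assert (F1: phi*phi*A = phi*A + A) by (rewrite H0; ring).
      assert (G: phi*q+1+q = 0) by (assert (q*(phi*phi) = q*(phi+1)) by (rewrite H0; ring); lra).
      assert (F2: phi*phi*q*q*q*A*B = -q*q*A*B) by (replace (phi*phi*q*q*q*A*B) with ((q*(phi*phi))*q*q*A*B) by ring; rewrite H; ring).
      assert (F3: phi*q*q*A*B + q*A*B + q*q*A*B = 0) by (replace (phi*q*q*A*B + q*A*B + q*q*A*B) with ((phi*q+1+q)*q*A*B) by ring; rewrite G; ring).
      lra. }
  intro m; apply H.
Qed.

Lemma qpoch_add : forall a qq n k, qpoch a qq (n + k) = qpoch a qq n * qpoch (a * qq ^ n) qq k.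
Proof. intros a qq n k. induction k.
  - rewrite Nat.add_0_r. simpl. ring.
  - rewrite Nat.add_succ_r. simpl. rewrite IHk. rewrite pow_add. ring. Qed.

Lemma qpoch_S_front : forall a qq n, qpoch a qq (S n) = (1 - a) * qpoch (a * qq) qq n.
Proof. intros a qq n. replace (S n) with (1 + n)%nat by lia. rewrite qpoch_add. simpl. replace (a*(qq*1)) with (a*qq) by ring. ring. Qed.

Lemma qpoch_zero : forall a qq n l, (l < n)%nat -> a * qq ^ l = 1 -> qpoch a qq n = 0.
Proof. intros a qq n l Hl H. induction n. lia. simpl.
  destruct (Nat.eq_dec l n). subst. rewrite H. ring.
  rewrite IHn by lia. ring. Qed.

Lemma qpoch_nonzero : forall a n, Rabs a < 1 -> qpoch a q n <> 0.
Proof. intros a n Ha. induction n. simpl; lra. simpl. apply Rmult_integral_contrapositive; split; auto.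
  intro E. assert (Rabs (a * q^n) < 1).
  { rewrite Rabs_mult. pose proof (abs_pow_lt1 q n q_abs). pose proof (Rabs_pos a). pose proof (Rabs_pos (q^n)). nra. }
  assert (a * q^n = 1) by lra. rewrite H0 in H. rewrite Rabs_R1 in H. lra. Qed.

Lemma qpoch_q_nonzero : forall n, qpoch q q n <> 0.
Proof. intros. apply qpoch_nonzero. apply q_abs. Qed.

Lemma pow_q_neq0 : forall n, q ^ n <> 0.
Proof. intros. apply pow_nonzero. apply q_neq0. Qed.

Definition beta (n k : nat) : R := qpoch (/ q ^ n) q k * q ^ k / qpoch q q k.

Lemma beta_0 : forall n, beta n 0 = 1.
Proof. intros. unfold beta. simpl. field. Qed.

Lemma beta_top : forall n, beta n (S n) = 0.
Proof. intros. unfold beta. rewrite (qpoch_zero _ _ _ n) by (lia || (field; apply pow_q_neq0)). unfold Rdiv. ring. Qed.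

Lemma beta_rec : forall n j, beta (S n) (S j) = beta n (S j) - / q ^ n * beta n j.
Proof. intros n j. unfold beta.
  rewrite (qpoch_S_front (/ q ^ S n)).
  replace (/ q ^ S n * q) with (/ q ^ n) by (simpl; field; split; [apply pow_q_neq0|apply q_neq0]).
  simpl qpoch at 2. simpl qpoch at 3. 
  pose proof (qpoch_q_nonzero j). pose proof (one_minus_qpow (S j) ltac:(lia)).
  pose proof (pow_q_neq0 n). pose proof q_neq0.
  simpl in *. field. split; auto. Qed.

Lemma beta_rec_sum : forall n (g : nat -> R),
  sum_f_R0 (fun k => beta (S n) k * g k) (S n) =
  sum_f_R0 (fun k => beta n k * g k) n - / q ^ n * sum_f_R0 (fun k => beta n k * g (S k)) n.
Proof. intros n g.
  rewrite decomp_sum by lia. simpl pred.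
  rewrite (sum_eq _ (fun i => beta n (S i) * g (S i) + (beta n i * g (S i)) * (- / q ^ n))).
  2:{ intros i _. rewrite beta_rec. ring. }
  rewrite sum_plus. rewrite <- scal_sum.
  assert (E: sum_f_R0 (fun k => beta n k * g k) (S n) = sum_f_R0 (fun k => beta n k * g k) n).
  { simpl. rewrite beta_top. ring. }
  rewrite <- E. rewrite (decomp_sum (fun k => beta n k * g k) (S n)) by lia. simpl pred.
  rewrite beta_0, beta_0. ring. Qed.

Fixpoint rr (n : nat) (z : R) : R :=
  match n with O => 1 | S m => rr m z * (1 - z * / q ^ m) end.

Lemma beta_R : forall n z, sum_f_R0 (fun k => beta n k * z ^ k) n = rr n z.
Proof. induction n; intro z.
  - simpl. rewrite beta_0. ring.
  - rewrite beta_rec_sum. rewrite IHn.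
    rewrite (sum_eq _ (fun k => beta n k * z ^ k * z)) by (intros; simpl; ring).
    rewrite <- scal_sum, IHn. simpl. ring. Qed.

Lemma rr_zero : forall n m, (m < n)%nat -> rr n (q ^ m) = 0.
Proof. induction n; intros m Hm. lia. simpl. destruct (Nat.eq_dec m n).
  - subst. rewrite Rinv_r by apply pow_q_neq0. ring.
  - rewrite IHn by lia. ring. Qed.

Lemma beta_T : forall n c, Rabs c < 1 ->
  sum_f_R0 (fun k => beta n k / (1 - c * q ^ k)) n = c ^ n * qpoch q q n / qpoch c q (S n).
Proof. induction n; intros c Hc.
  - simpl. rewrite beta_0. field. intro E. assert (c = 1) by lra. subst. rewrite Rabs_R1 in Hc. lra.
  - unfold Rdiv at 1. rewrite beta_rec_sum.
    assert (Hcq : Rabs (c * q) < 1).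
    { rewrite Rabs_mult. pose proof q_abs. pose proof (Rabs_pos c). pose proof (Rabs_pos q). nra. }
    pose proof (IHn c Hc) as I1. pose proof (IHn (c*q) Hcq) as I2.
    unfold Rdiv in I1, I2. rewrite I1.
    rewrite (sum_eq _ (fun k => beta n k * / (1 - c * q * q ^ k))) by (intros; simpl; f_equal; f_equal; f_equal; ring).
    rewrite I2.
    pose proof (qpoch_nonzero c (S (S n)) Hc) as Z.
    pose proof (qpoch_nonzero c (S n) Hc) as X.
    pose proof (qpoch_nonzero (c*q) (S n) Hcq) as Y.
    assert (EX: qpoch c q (S (S n)) = qpoch c q (S n) * (1 - c * q ^ (S n))) by reflexivity.
    assert (EY: qpoch c q (S (S n)) = (1 - c) * qpoch (c*q) q (S n)) by apply qpoch_S_front.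
    assert (EQ: qpoch q q (S n) = qpoch q q n * (1 - q * q ^ n)) by reflexivity.
    rewrite EQ.
    set (Xv := qpoch c q (S n)) in *. set (Yv := qpoch (c*q) q (S n)) in *. set (Zv := qpoch c q (S (S n))) in *.
    set (Q := qpoch q q n).
    assert (HX: / Xv = (1 - c * q ^ S n) / Zv) by (rewrite EX; field; split; auto; intro; apply Z; rewrite EX; rewrite H; ring).
    assert (HY: / Yv = (1 - c) / Zv) by (rewrite EY; field; split; auto; intro; apply Z; rewrite EY; rewrite H; ring).
    rewrite HX, HY. rewrite Rpow_mult_distr. simpl. pose proof (pow_q_neq0 n). field. split; auto. Qed.

Inductive Pd : nat -> (R -> R) -> Prop :=
| Pd0 : forall a (f : R -> R), (forall z, f z = a) -> Pd 0 f
| PdS : forall d a (g f : R -> R), Pd d g -> (forall z, f z = a + z * g z) -> Pd (S d) f.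

Lemma Pd_ext : forall d f g, Pd d f -> (forall z, g z = f z) -> Pd d g.
Proof. intros d f g H E. destruct H.
  - apply Pd0 with a. intro z; rewrite E; auto.
  - apply PdS with a g0; auto. intro z; rewrite E; auto. Qed.

Lemma Pd_addc : forall d f b, Pd d f -> Pd d (fun z => f z + b).
Proof. intros d f b H. destruct H.
  - apply Pd0 with (a + b). intro; rewrite H; auto.
  - apply PdS with (a + b) g; auto. intro; rewrite H0; ring. Qed.

Lemma Pd_mul_lin : forall d f c, Pd d f -> Pd (S d) (fun z => f z * (1 - c * z)).
Proof. intros d f c H. revert c. induction H; intro c.
  - apply PdS with a (fun _ => - c * a). apply Pd0 with (- c * a); auto.
    intro z. rewrite H. ring.
  - apply PdS with a (fun z => g z * (1 - c * z) + - c * a).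
    apply Pd_addc. apply IHPd.
    intro z. rewrite H0. ring. Qed.

Lemma Pd_qpoch : forall n u, Pd n (fun z => qpoch (u * z) q n).
Proof. induction n; intro u.
  - apply Pd0 with 1. reflexivity.
  - simpl. apply Pd_ext with (fun z => qpoch (u * z) q n * (1 - (u * q ^ n) * z)).
    apply Pd_mul_lin. apply IHn. intro; f_equal; ring. Qed.

Lemma Pd_div : forall d f c, c <> 0 -> Pd d f ->
  exists Q, Pd (pred d) Q /\ forall z, f z = f (/ c) + (1 - c * z) * Q z.
Proof. intros d f c Hc H. induction H.
  - exists (fun _ => 0). split. apply Pd0 with 0; auto. intro z. rewrite !H. ring.
  - destruct d.
    + inversion H; subst. exists (fun _ => - a0 / c). split. apply Pd0 with (- a0 / c); auto.
      intro z. rewrite !H0, !H1. field. auto.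
    + destruct IHPd as [Qg [HQg EQg]].
      exists (fun z => - g (/ c) / c + z * Qg z). split.
      * simpl. apply PdS with (- g (/ c) / c) Qg; auto.
      * intro z. rewrite !H0. rewrite (EQg z). field. auto.
Qed.

Lemma Pd_orth : forall n d Q, Pd d Q -> forall m, (d + m < n)%nat ->
  sum_f_R0 (fun k => beta n k * ((q ^ k) ^ m * Q (q ^ k))) n = 0.
Proof. intros n d Q H. induction H; intros m Hm.
  - rewrite (sum_eq _ (fun k => beta n k * (q ^ m) ^ k * a)).
    2:{ intros. rewrite H, <- !pow_mult, Nat.mul_comm. ring. }
    rewrite <- scal_sum. rewrite beta_R. rewrite rr_zero by lia. ring.
  - rewrite (sum_eq _ (fun k => beta n k * (q ^ m) ^ k * a + beta n k * ((q ^ k) ^ (S m) * g (q ^ k)))).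
    2:{ intros k _. rewrite H0. rewrite <- (pow_mult q m k), <- (pow_mult q k m), <- (pow_mult q k (S m)), (Nat.mul_comm m k).
        replace (k * S m)%nat with (k * m + k)%nat by lia. rewrite pow_add. ring. }
    rewrite sum_plus. rewrite <- scal_sum. rewrite beta_R. rewrite rr_zero by lia. rewrite IHPd by lia. ring. Qed.

Definition ccu (u : R) (n k : nat) : R :=
  qpoch (/ q ^ n) q k * qpoch (u * q ^ n) q k / (qpoch q q k * qpoch u q k).

Lemma ccu_beta : forall u n k, Rabs u < 1 ->
  ccu u n k * q ^ k = beta n k * qpoch (u * q ^ k) q n / qpoch u q n.
Proof. intros u n k Hu. unfold ccu, beta.
  assert (E: qpoch (u * q ^ n) q k * qpoch u q n = qpoch (u * q ^ k) q n * qpoch u q k).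
  { transitivity (qpoch u q (n + k)). rewrite qpoch_add; ring. rewrite Nat.add_comm, qpoch_add; ring. }
  pose proof (qpoch_nonzero u n Hu). pose proof (qpoch_nonzero u k Hu). pose proof (qpoch_q_nonzero k).
  apply Rmult_eq_reg_r with (qpoch u q n * qpoch u q k * qpoch q q k).
  2:{ repeat apply Rmult_integral_contrapositive; split; auto; split; auto. }
  field_simplify; auto. transitivity (qpoch (/ q ^ n) q k * q ^ k * (qpoch (u * q ^ n) q k * qpoch u q n)); [ring|]. rewrite E. ring. Qed.

Lemma Rabs_uql : forall u l, Rabs u < 1 -> Rabs (u * q ^ l) < 1.
Proof. intros. rewrite Rabs_mult. pose proof (abs_pow_lt1 q l q_abs). pose proof (Rabs_pos u). pose proof (Rabs_pos (q^l)). nra. Qed.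

Lemma one_minus_ne0 : forall c, Rabs c < 1 -> 1 - c <> 0.
Proof. intros c H E. assert (c = 1) by lra. subst. rewrite Rabs_R1 in H. lra. Qed.

Lemma Jval : forall u n l, Rabs u < 1 -> u <> 0 -> (l <= n)%nat ->
  sum_f_R0 (fun k => ccu u n k * q ^ k / (1 - u * q ^ l * q ^ k)) n =
  qpoch (/ q ^ l) q n / qpoch u q n * ((u * q ^ l) ^ n * qpoch q q n / qpoch (u * q ^ l) q (S n)).
Proof. intros u n l Hu Hu0 Hl.
  set (c := u * q ^ l).
  assert (Hc : Rabs c < 1) by (apply Rabs_uql; auto).
  assert (Hc0 : c <> 0) by (unfold c; apply Rmult_integral_contrapositive; split; auto; apply pow_q_neq0).
  destruct (Pd_div n (fun z => qpoch (u * z) q n) c Hc0 (Pd_qpoch n u)) as [Q [HQ EQ]].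
  assert (Hf : qpoch (u * / c) q n = qpoch (/ q ^ l) q n).
  { f_equal. unfold c. field. split; auto. apply pow_q_neq0. }
  rewrite (sum_eq _ (fun k => (beta n k / (1 - c * q ^ k)) * (qpoch (/ q ^ l) q n / qpoch u q n) + beta n k * ((q ^ k) ^ 0 * Q (q ^ k)) * / qpoch u q n)).
  2:{ intros k _. unfold Rdiv at 1. rewrite ccu_beta by auto. rewrite (EQ (q ^ k)), Hf.
      assert (1 - c * q ^ k <> 0) by (apply one_minus_ne0; apply Rabs_uql; auto).
      pose proof (qpoch_nonzero u n Hu). fold c. simpl. field. auto. }
  rewrite sum_plus, <- !scal_sum.
  destruct n as [|n'].
  - simpl. rewrite beta_0. simpl in EQ. specialize (EQ 0). 
    inversion HQ; subst. rewrite H in *. simpl. rewrite Rmult_0_r in EQ. 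
    assert (a = 0) by (replace (u*0) with 0 in EQ by ring; simpl in EQ; lra). subst.
    pose proof (one_minus_ne0 c Hc). replace (c*1) with c by ring. field. auto.
  - rewrite (Pd_orth (S n') n' Q HQ 0) by lia.
    rewrite beta_T by auto. unfold c. ring. Qed.

Lemma one_minus_q_ne0 : 1 - q <> 0.
Proof. pose proof q_neg. lra. Qed.

Lemma phi_ne0 : phi <> 0.
Proof. pose proof phi_gt1. lra. Qed.

Lemma F_eq : forall m, F (S m) = phi ^ m * (1 - q ^ S m) / (1 - q).
Proof. intro m. pose proof (F_succ m). pose proof one_minus_q_ne0.
  apply Rmult_eq_reg_r with (1 - q); auto. rewrite H. field. auto. Qed.

Lemma fib_pos : forall m, (1 <= fib (S m))%nat.
Proof. assert (forall m, (1 <= fib (S m))%nat /\ (1 <= fib (S (S m)))%nat).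
  { induction m. simpl; lia. destruct IHm. split; auto.
    replace (fib (S (S (S m)))) with (fib (S (S m)) + fib (S m))%nat by reflexivity. lia. }
  apply H. Qed.

Lemma F_ne0 : forall m, F (S m) <> 0.
Proof. intro m. unfold F. apply not_0_INR. pose proof (fib_pos m). lia. Qed.

Lemma F_pos : forall m, 0 < F (S m).
Proof. intro m. unfold F. apply lt_0_INR. pose proof (fib_pos m). lia. Qed.

Lemma fib_closed : forall n d, fibonomial (n + d) n * qpoch q q n = phi ^ (n * d) * qpoch (q ^ S d) q n.
Proof. induction n; intro d.
  - simpl. ring.
  - replace (S n + d)%nat with (n + S d)%nat by lia.
    simpl fibonomial. simpl qpoch at 1.
    replace (n + S d - n)%nat with (S d) by lia.
    rewrite qpoch_S_front.
    replace (q ^ S d * q) with (q ^ S (S d)) by (simpl; ring).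
    set (X := qpoch (q ^ S (S d)) q n).
    pose proof (qpoch_q_nonzero n).
    assert (Hf : fibonomial (n + S d) n = phi ^ (n * S d) * X / qpoch q q n).
    { rewrite <- IHn. field. auto. }
    rewrite Hf.
    pose proof (pow_nonzero phi d phi_ne0). pose proof (pow_nonzero phi n phi_ne0).
    assert (Hp: phi ^ (n * S d) = phi ^ (S n * d) * phi ^ n / phi ^ d).
    { apply Rmult_eq_reg_r with (phi ^ d); auto. field_simplify; auto. rewrite <- !pow_add. f_equal. nia. }
    rewrite Hp.
    rewrite !F_eq. pose proof one_minus_q_ne0. pose proof (one_minus_qpow (S n) ltac:(lia)).
    simpl in *. field. repeat split; auto.
Qed.

Lemma fib_shift : forall n d, fibonomial (n + S d) n = fibonomial (n + d) n * (F (n + S d) / F (S d)).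
Proof. intros n d. pose proof (qpoch_q_nonzero n).
  assert (E1 : fibonomial (n + S d) n = phi ^ (n * S d) * qpoch (q ^ S (S d)) q n / qpoch q q n)
    by (rewrite <- fib_closed; field; auto).
  assert (E2 : fibonomial (n + d) n = phi ^ (n * d) * qpoch (q ^ S d) q n / qpoch q q n)
    by (rewrite <- fib_closed; field; auto).
  pose proof (one_minus_qpow (S d) ltac:(lia)).
  assert (E3 : qpoch (q ^ S (S d)) q n = qpoch (q ^ S d) q n * (1 - q ^ S d * q ^ n) / (1 - q ^ S d)).
  { apply Rmult_eq_reg_r with (1 - q ^ S d); auto. field_simplify; auto.
    pose proof (qpoch_S_front (q ^ S d) q n) as H1.
    change (qpoch (q ^ S d) q (S n)) with (qpoch (q ^ S d) q n * (1 - q ^ S d * q ^ n)) in H1.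
    replace (q ^ S d * q) with (q ^ S (S d)) in H1 by (simpl; ring). lra. }
  rewrite E1, E2, E3. replace (n + S d)%nat with (S (n + d)) by lia. rewrite !F_eq.
  replace (n * S d)%nat with (n * d + n)%nat by nia. rewrite !pow_add.
  replace (S (n + d)) with (S d + n)%nat by lia. rewrite pow_add.
  pose proof one_minus_q_ne0. pose proof (pow_nonzero phi d phi_ne0). pose proof (pow_nonzero phi n phi_ne0).
  field. repeat split; auto. Qed.

Lemma qd_rel : forall d, q ^ d = (-1) ^ d / (phi ^ d * phi ^ d).
Proof. intro d. pose proof (pow_nonzero phi d phi_ne0).
  assert (q ^ d * (phi ^ d * phi ^ d) = (-1) ^ d).
  { rewrite <- q_phi. rewrite !Rpow_mult_distr. ring. }
  rewrite <- H0. field. auto. Qed.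

Lemma step_id : forall a k d,
 (1 - / q ^ (k + S d) * q ^ k) * (1 - q ^ S a * q ^ (k + S d) * q ^ k) / ((1 - q * q ^ k) * (1 - q ^ S a * q ^ k)) * (phi * q)
 = (-1) ^ (S d) * (F (S d) / F (S k)) * (F ((k + S d) + S (a + k)) / F (S (a + k))).
Proof. intros a k d.
  replace ((k + S d) + S (a + k))%nat with (S (k + S d + a + k)) by lia.
  rewrite !F_eq.
  pose proof (one_minus_qpow (S k) ltac:(lia)) as N1.
  pose proof (one_minus_qpow (S (a + k)) ltac:(lia)) as N2.
  pose proof (one_minus_qpow (S d) ltac:(lia)) as N3.
  replace (S (k + S d + a + k)) with (S a + (k + S d) + k)%nat by lia.
  replace (k + S d + a + k)%nat with (d + S (a + k) + k)%nat by lia.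
  rewrite !pow_add. 
  replace (S (a + k)) with (S a + k)%nat in * by lia. rewrite !pow_add in *.
  simpl pow in *. 
  pose proof one_minus_q_ne0. pose proof q_neq0. pose proof phi_ne0.
  pose proof (pow_nonzero phi d phi_ne0). pose proof (pow_nonzero phi a phi_ne0). pose proof (pow_nonzero phi k phi_ne0).
  pose proof (pow_nonzero q d q_neq0). pose proof (pow_nonzero q a q_neq0). pose proof (pow_nonzero q k q_neq0).
  rewrite (qd_rel d) in *.
  assert (Hs : (-1) ^ d = 1 \/ (-1) ^ d = -1).
  { clear. induction d. left; simpl; lra. simpl. destruct IHd as [E|E]; rewrite E; [right|left]; lra. }
  destruct Hs as [Hs|Hs]; rewrite Hs in *; field; repeat split; auto.
Qed.


Lemma sign_step : forall k d,
  (-1) ^ (S k * (k + S d) - S k * (S k - 1) / 2) = (-1) ^ (k * (k + S d) - k * (k - 1) / 2) * (-1) ^ (S d).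
Proof. intros k d.
  assert (E1 : (S k * (S k - 1) / 2 = k * (k - 1) / 2 + k)%nat).
  { replace (S k * (S k - 1))%nat with (k * (k - 1) + k * 2)%nat.
    rewrite Nat.div_add by lia. reflexivity.
    destruct k; simpl; nia. }
  rewrite E1.
  set (t := (k * (k - 1) / 2)%nat).
  assert (Ht : (2 * t <= k * (k - 1))%nat) by (apply Nat.Div0.mul_div_le).
  assert (Hk : (k * (k - 1) <= k * (k + S d))%nat) by (apply Nat.mul_le_mono_l; lia).
  rewrite <- pow_add. f_equal. nia. Qed.

Lemma ccu_step : forall u n k, Rabs u < 1 ->
  ccu u n (S k) = ccu u n k * ((1 - / q ^ n * q ^ k) * (1 - u * q ^ n * q ^ k) / ((1 - q * q ^ k) * (1 - u * q ^ k))).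
Proof. intros u n k Hu. unfold ccu. simpl qpoch.
  pose proof (qpoch_q_nonzero k). pose proof (qpoch_nonzero u k Hu).
  pose proof (one_minus_qpow (S k) ltac:(lia)). simpl in H1.
  assert (1 - u * q ^ k <> 0) by (apply one_minus_ne0; apply Rabs_uql; auto).
  pose proof (pow_q_neq0 n). field. repeat split; auto. Qed.

Lemma coef_id : forall a n k, (k <= n)%nat ->
  fibonomial (S a + n - 1) n * ccu (q ^ S a) n k * (phi * q) ^ k =
  (-1) ^ (k * n - k * (k - 1) / 2) * fibonomial n k * fibonomial (S a + n + k - 1) n.
Proof. intros a n k. induction k; intro Hk.
  - unfold ccu. simpl. rewrite !Nat.sub_0_r, !Nat.add_0_r. field.
  - assert (Hu : Rabs (q ^ S a) < 1) by (apply qpow_abs; lia).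
    destruct (Nat.le_exists_sub (S k) n Hk) as [d0 [Hd _]].
    assert (Hn : n = (k + S d0)%nat) by lia. clear Hd.
    rewrite ccu_step by auto.
    transitivity (fibonomial (S a + n - 1) n * ccu (q ^ S a) n k * (phi * q) ^ k *
      ((1 - / q ^ n * q ^ k) * (1 - q ^ S a * q ^ n * q ^ k) / ((1 - q * q ^ k) * (1 - q ^ S a * q ^ k)) * (phi * q))).
    { simpl. ring. }
    rewrite IHk by lia. subst n. rewrite step_id.
    change (fibonomial (k + S d0) (S k)) with (fibonomial (k + S d0) k * (F (k + S d0 - k) / F (S k))).
    replace (k + S d0 - k)%nat with (S d0) by lia.
    replace (S a + (k + S d0) + S k - 1)%nat with ((k + S d0) + S (a + k))%nat by lia.
    rewrite (fib_shift (k + S d0) (a + k)).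
    replace (S a + (k + S d0) + k - 1)%nat with ((k + S d0) + (a + k))%nat by lia.
    rewrite sign_step. ring. Qed.

Lemma jacobi_ccu : forall a n y,
  little_qjacobi n y (q ^ (S a - 1)) 1 q = sum_f_R0 (fun k => ccu (q ^ S a) n k * (y * q) ^ k) n.
Proof. intros a n y. unfold little_qjacobi, ccu. apply sum_eq. intros k _.
  replace (q ^ (S a - 1) * 1 * q ^ S n) with (q ^ S a * q ^ n) by (simpl; rewrite Nat.sub_0_r; ring).
  replace (q ^ (S a - 1) * q) with (q ^ S a) by (simpl; rewrite Nat.sub_0_r; ring).
  reflexivity. Qed.

Lemma part1 : forall alpha, (1 <= alpha)%nat -> forall n x,
  palpha alpha n x =
  sum_f_R0 (fun k => (-1) ^ (k * n - k * (k - 1) / 2)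
                     * fibonomial n k * fibonomial (alpha + n + k - 1) n * x ^ k) n.
Proof. intros alpha Ha n x. destruct alpha as [|a]. lia.
  unfold palpha. rewrite jacobi_ccu. rewrite scal_sum. apply sum_eq. intros k Hk.
  rewrite <- coef_id by auto.
  replace (x * phi * q) with ((phi * q) * x) by ring. rewrite Rpow_mult_distr. ring. Qed.

Lemma series_finsum : forall (f : nat -> nat -> R) (v : nat -> R) N,
  (forall k, (k <= N)%nat -> is_series (f k) (v k)) ->
  is_series (fun s => sum_f_R0 (fun k => f k s) N) (sum_f_R0 v N).
Proof. intros f v N. induction N; intro H.
  - simpl. apply H. lia.
  - simpl. apply (is_series_plus (fun s => sum_f_R0 (fun k => f k s) N) (f (S N))).
    apply IHN. intros; apply H; lia. apply H; lia. Qed.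

Lemma series_geom_c : forall C r, Rabs r < 1 -> is_series (fun s => C * r ^ s) (C / (1 - r)).
Proof. intros C r Hr. apply (is_series_scal_l C (fun s => r ^ s)). apply is_series_geom. auto. Qed.

Lemma palpha_at : forall a n s,
  palpha (S a) n (mu_point s) =
  fibonomial (S a + n - 1) n * sum_f_R0 (fun k => ccu (q ^ S a) n k * q ^ k * (q ^ k) ^ s) n.
Proof. intros a n s. unfold palpha. rewrite jacobi_ccu. f_equal. apply sum_eq. intros k _.
  replace (mu_point s * phi * q) with (q ^ s * q) by (unfold mu_point; field; apply phi_ne0).
  rewrite Rpow_mult_distr, <- !pow_mult, Nat.mul_comm. ring. Qed.

Definition Bf (a n : nat) : R := fibonomial (S a + n - 1) n.
Definition Acoef (a n m l : nat) : R :=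
  Bf a m * ccu (q ^ S a) m l * q ^ l * (Bf a n * (1 - q ^ S a)).

Lemma term_expand : forall a n m s,
  mu_weight (S a) s * (palpha (S a) n (mu_point s) * palpha (S a) m (mu_point s)) =
  sum_f_R0 (fun l => sum_f_R0 (fun k => Acoef a n m l * (ccu (q ^ S a) n k * q ^ k) * (q ^ S a * q ^ l * q ^ k) ^ s) n) m.
Proof. intros a n m s. rewrite !palpha_at. unfold mu_weight, Acoef, Bf.
  set (u := q ^ S a).
  set (Sn := sum_f_R0 (fun k => ccu u n k * q ^ k * (q ^ k) ^ s) n).
  symmetry. rewrite (sum_eq _ (fun l => (ccu u m l * q ^ l * (q ^ l) ^ s) * (fibonomial (S a + m - 1) m * (fibonomial (S a + n - 1) n * (1 - u)) * u ^ s * Sn))).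
  2:{ intros l _.
      transitivity ((fibonomial (S a + m - 1) m * ccu u m l * q ^ l * (fibonomial (S a + n - 1) n * (1 - u)) * u ^ s * (q ^ l) ^ s) * Sn).
      { unfold Sn. rewrite scal_sum. apply sum_eq. intros k _. rewrite !Rpow_mult_distr. ring. }
      ring. }
  rewrite <- scal_sum. ring. Qed.

Lemma series_val : forall a n m,
  is_mu_integral (S a) (fun x => palpha (S a) n x * palpha (S a) m x)
    (sum_f_R0 (fun l => Acoef a n m l * sum_f_R0 (fun k => ccu (q ^ S a) n k * q ^ k / (1 - q ^ S a * q ^ l * q ^ k)) n) m).
Proof. intros a n m. unfold is_mu_integral.
  eapply is_series_ext. { intro s. symmetry. apply term_expand. }
  apply series_finsum. intros l _.
  rewrite scal_sum.
  apply series_finsum. intros k _.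
  replace (ccu (q ^ S a) n k * q ^ k / (1 - q ^ S a * q ^ l * q ^ k) * Acoef a n m l)
    with (Acoef a n m l * (ccu (q ^ S a) n k * q ^ k) / (1 - q ^ S a * q ^ l * q ^ k)) by (unfold Rdiv; ring).
  apply series_geom_c.
  rewrite Rmult_assoc. replace (q ^ l * q ^ k) with (q ^ (l + k)) by apply pow_add.
  apply Rabs_uql. apply qpow_abs. lia. Qed.

Lemma Jzero : forall a n l, (l < n)%nat ->
  sum_f_R0 (fun k => ccu (q ^ S a) n k * q ^ k / (1 - q ^ S a * q ^ l * q ^ k)) n = 0.
Proof. intros a n l Hl. 
  assert (Hu : Rabs (q ^ S a) < 1) by (apply qpow_abs; lia).
  rewrite Jval by (auto; lia || apply pow_q_neq0).
  rewrite (qpoch_zero (/ q ^ l) q n l Hl) by (field; apply pow_q_neq0). unfold Rdiv. ring. Qed.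

Lemma D_form : forall n, exists G, G <> 0 /\ qpoch (/ q ^ n) q n = qpoch q q n / G /\ G * G = q ^ (n * (n + 1)).
Proof. induction n.
  - exists 1. split. lra. split. simpl. field. simpl. ring.
  - destruct IHn as [G [HG [HD HGG]]].
    exists (G * (- q ^ (S n))). pose proof (pow_q_neq0 (S n)). split.
    + apply Rmult_integral_contrapositive; split; auto. apply Ropp_neq_0_compat; auto.
    + split.
      * rewrite qpoch_S_front. replace (/ q ^ S n * q) with (/ q ^ n) by (simpl; field; split; [apply pow_q_neq0|apply q_neq0]).
        rewrite HD. simpl qpoch at 2. pose proof (pow_q_neq0 n). pose proof q_neq0. simpl pow. simpl pow in H. field. repeat split; auto.
      * replace (S n * (S n + 1))%nat with (n * (n + 1) + S n + S n)%nat by nia.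
        rewrite !pow_add, <- HGG. ring.
Qed.

Lemma norm_val : forall a n,
  Acoef a n n n * (qpoch (/ q ^ n) q n / qpoch (q ^ S a) q n *
     ((q ^ S a * q ^ n) ^ n * qpoch q q n / qpoch (q ^ S a * q ^ n) q (S n)))
  = (-1) ^ (S a * n) * F (S a) / F (S a + 2 * n).
Proof. intros a n. unfold Acoef, Bf.
  assert (Hu : Rabs (q ^ S a) < 1) by (apply qpow_abs; lia).
  pose proof (ccu_beta (q ^ S a) n n Hu) as E1.
  set (u := q ^ S a) in *.
  set (U := qpoch u q n). set (Qn := qpoch q q n). set (Wn := qpoch (u * q ^ n) q n).
  assert (NU : U <> 0) by (apply qpoch_nonzero; auto).
  assert (NQ : Qn <> 0) by apply qpoch_q_nonzero.
  assert (HuN : Rabs (u * q ^ n) < 1) by (apply Rabs_uql; auto).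
  assert (NW : Wn <> 0) by (apply qpoch_nonzero; auto).
  assert (N1 : 1 - u * q ^ n * q ^ n <> 0) by (rewrite Rmult_assoc, <- pow_add; apply one_minus_ne0; apply Rabs_uql; auto).
  destruct (D_form n) as [G [NG [ED EG]]].
  assert (E2 : beta n n = qpoch (/ q ^ n) q n * q ^ n / Qn) by reflexivity.
  assert (E3 : fibonomial (S a + n - 1) n = phi ^ (n * a) * U / Qn).
  { replace (S a + n - 1)%nat with (n + a)%nat by lia. pose proof (fib_closed n a) as H. fold Qn in H.
    apply Rmult_eq_reg_r with Qn; auto. rewrite H. unfold U, u. field. auto. }
  assert (E5 : qpoch (u * q ^ n) q (S n) = Wn * (1 - u * q ^ n * q ^ n)) by reflexivity.
  assert (E6 : F (S a) = phi ^ a * (1 - u) / (1 - q)) by (rewrite F_eq; reflexivity).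
  assert (E7 : F (S a + 2 * n) = phi ^ a * phi ^ n * phi ^ n * (1 - u * q ^ n * q ^ n) / (1 - q)).
  { replace (S a + 2 * n)%nat with (S (a + n + n)) by lia. rewrite F_eq. rewrite !pow_add.
    replace (S (a + n + n)) with (S a + n + n)%nat by lia. rewrite !pow_add. reflexivity. }
  assert (E8 : (-1) ^ (S a * n) = phi ^ (n * a) * phi ^ (n * a) * phi ^ n * phi ^ n * u ^ n).
  { rewrite <- q_phi. rewrite !Rpow_mult_distr. unfold u. rewrite <- pow_mult.
    replace (S a * n)%nat with (n * a + n)%nat by nia. rewrite !pow_add. ring. }
  assert (E9 : (u * q ^ n) ^ n = u ^ n * (G * G / q ^ n)).
  { rewrite Rpow_mult_distr, EG, <- pow_mult. replace (n * (n + 1))%nat with (n * n + n)%nat by nia.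
    rewrite pow_add. field. apply pow_q_neq0. }
  assert (Hc : ccu u n n = beta n n * Wn / U / q ^ n).
  { apply Rmult_eq_reg_r with (q ^ n). rewrite E1. fold Wn U. field. split; auto; apply pow_q_neq0. apply pow_q_neq0. }
  rewrite Hc, E2, ED, E3, E5, E6, E7, E8, E9. fold Qn.
  pose proof one_minus_q_ne0. pose proof (pow_nonzero phi a phi_ne0). pose proof (pow_nonzero phi n phi_ne0).
  pose proof (pow_nonzero phi (n * a) phi_ne0). pose proof (pow_q_neq0 n).
  assert (1 - u <> 0) by (apply one_minus_ne0; auto).
  assert (u ^ n <> 0) by (apply pow_nonzero; unfold u; apply pow_q_neq0).
  field. repeat split; auto.
Qed.

Lemma sum_last_only : forall f n, (forall l, (l < n)%nat -> f l = 0) -> sum_f_R0 f n = f n.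
Proof. intros f n H. destruct n. reflexivity. simpl. rewrite sum_eq_R0. ring. intros; apply H; lia. Qed.

Lemma part2_le : forall a n m, (m <= n)%nat ->
  is_mu_integral (S a) (fun x => palpha (S a) n x * palpha (S a) m x)
        (if Nat.eq_dec n m
         then (-1) ^ (S a * n) * F (S a) / F (S a + 2 * n)
         else 0).
Proof. intros a n m Hmn.
  assert (Hu : Rabs (q ^ S a) < 1) by (apply qpow_abs; lia).
  pose proof (series_val a n m) as HS.
  destruct (Nat.eq_dec n m) as [E|E].
  - subst m. 
    rewrite sum_last_only in HS.
    2:{ intros l Hl. rewrite Jzero by auto. ring. }
    rewrite Jval in HS by (auto; lia || apply pow_q_neq0).
    rewrite norm_val in HS. exact HS.
  - rewrite sum_eq_R0 in HS. exact HS.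
    intros l Hl. rewrite Jzero by lia. ring. Qed.

Lemma part2 : forall alpha, (1 <= alpha)%nat -> forall n m,
  is_mu_integral alpha (fun x => palpha alpha n x * palpha alpha m x)
        (if Nat.eq_dec n m
         then (-1) ^ (alpha * n) * F alpha / F (alpha + 2 * n)
         else 0).
Proof. intros alpha Ha n m. destruct alpha as [|a]. lia.
  destruct (Nat.le_gt_cases m n) as [H|H].
  - apply part2_le; auto.
  - pose proof (part2_le a m n ltac:(lia)) as P.
    destruct (Nat.eq_dec m n) as [E|E]. lia.
    destruct (Nat.eq_dec n m) as [E'|E']. lia.
    unfold is_mu_integral in *. eapply is_series_ext; [|exact P]. intro s. simpl. ring. Qed.

Lemma sum_n_RtoC : forall (a : nat -> R) N, @sum_n C_AbelianMonoid (fun s => RtoC (a s)) N = RtoC (sum_n a N).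
Proof. intros a N. induction N.
  - rewrite !sum_O. reflexivity.
  - rewrite !sum_Sn. rewrite IHN. simpl. unfold plus; simpl. rewrite <- RtoC_plus. reflexivity. Qed.

Lemma RtoC_cont : forall l : R, filterlim RtoC (locally l) (@locally C_UniformSpace (RtoC l)).
Proof. intros l. apply filterlim_locally. intro eps. exists eps. intros y Hy.
  unfold ball in *. simpl. unfold prod_ball. simpl. split. exact Hy.
  unfold ball; simpl. unfold AbsRing_ball. unfold minus, plus, opp; simpl. unfold abs; simpl. rewrite Ropp_0, Rplus_0_r, Rabs_R0. apply cond_pos. Qed.

Lemma is_series_RtoC : forall (a : nat -> R) l, is_series a l ->
  @is_series C_AbsRing C_NormedModule (fun s => RtoC (a s)) (RtoC l).
Proof. intros a l H. unfold is_series in *.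
  eapply filterlim_ext. { intro N. symmetry. apply sum_n_RtoC. }
  eapply filterlim_comp. exact H. apply RtoC_cont. Qed.

Lemma csqrt_sq : forall t, Cmult (csqrt_principal t) (csqrt_principal t) = RtoC t.
Proof. intro t. unfold csqrt_principal. destruct (Rle_dec 0 t).
  - unfold Cmult, RtoC; simpl. f_equal. rewrite sqrt_sqrt by auto. ring. ring.
  - unfold Cmult, RtoC; simpl. f_equal. ring_simplify. rewrite <- Rsqr_pow2, Rsqr_sqrt by lra. ring. ring. Qed.

Lemma part3_gen : forall alpha n m v,
  is_mu_integral alpha (fun x => palpha alpha n x * palpha alpha m x) v ->
  is_mu_integralC alpha (fun x => Cmult (Palpha alpha n x) (Palpha alpha m x))
    (Cmult (Cmult (csqrt_principal ((-1) ^ (alpha * n) * F (alpha + 2 * n) / F alpha))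
                  (csqrt_principal ((-1) ^ (alpha * m) * F (alpha + 2 * m) / F alpha))) (RtoC v)).
Proof. intros alpha n m v H. unfold is_mu_integralC, is_mu_integral in *.
  set (K := Cmult (csqrt_principal ((-1) ^ (alpha * n) * F (alpha + 2 * n) / F alpha))
                  (csqrt_principal ((-1) ^ (alpha * m) * F (alpha + 2 * m) / F alpha))).
  apply is_series_RtoC in H.
  apply (is_series_scal_l K) in H.
  eapply is_series_ext; [|exact H].
  intro s. unfold K, Palpha. change (scal ?a ?b) with (Cmult a b).
  destruct (csqrt_principal ((-1) ^ (alpha * n) * F (alpha + 2 * n) / F alpha)) as [x1 y1].
  destruct (csqrt_principal ((-1) ^ (alpha * m) * F (alpha + 2 * m) / F alpha)) as [x2 y2].
  unfold Cmult, RtoC; simpl. f_equal; ring. Qed.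

Theorem theorem3p1 (alpha : nat) (Halpha : (1 <= alpha)%nat) :
  (forall (n : nat) (x : R),
      palpha alpha n x =
      sum_f_R0 (fun k => (-1) ^ (k * n - k * (k - 1) / 2)
                         * fibonomial n k * fibonomial (alpha + n + k - 1) n
                         * x ^ k) n)
  /\
  (forall n m : nat,
      is_mu_integral alpha (fun x => palpha alpha n x * palpha alpha m x)
        (if Nat.eq_dec n m
         then (-1) ^ (alpha * n) * F alpha / F (alpha + 2 * n)
         else 0))
  /\
  (forall n m : nat,
      is_mu_integralC alpha (fun x => Cmult (Palpha alpha n x) (Palpha alpha m x))
        (if Nat.eq_dec n m then RtoC 1 else RtoC 0)).
Proof.
  split; [apply part1; auto|]. split; [apply part2; auto|].
  intros n m. pose proof (part3_gen alpha n m _ (part2 alpha Halpha n m)) as H.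
  destruct (Nat.eq_dec n m) as [E|E].
  - subst m. rewrite csqrt_sq in H.
    destruct alpha as [|a]. lia.
    pose proof (F_ne0 a). replace (S a + 2 * n)%nat with (S (a + 2 * n)) in * by lia.
    pose proof (F_ne0 (a + 2 * n)).
    assert (Hs : (-1) ^ (S a * n) * (-1) ^ (S a * n) = 1) by (rewrite <- Rpow_mult_distr; replace (-1 * -1) with 1 by ring; apply pow1).
    replace (Cmult (RtoC ((-1) ^ (S a * n) * F (S (a + 2 * n)) / F (S a)))
              (RtoC ((-1) ^ (S a * n) * F (S a) / F (S (a + 2 * n))))) with (RtoC 1) in H.
    exact H.
    rewrite <- RtoC_mult. f_equal. set (s := (-1) ^ (S a * n)) in *. rewrite <- Hs. field. split; auto.
  - assert (Z : forall z, Cmult z (RtoC 0) = RtoC 0) by (intros [x y]; unfold Cmult, RtoC; cbn [fst snd]; f_equal; ring).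
    rewrite Z in H. exact H.
Qed.
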